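(* For any natural number $n \geq 1$, $\{\omega \cdot n, \omega^\star \cdot n\} \leq_c \{\omega^2 \cdot n, (\omega^2)^\star \cdot n\}$.
   Context: Structures have domains contained in $\omega$. For countable structures $\mathcal{A},\mathcal{B}$, the class $\{\mathcal{A},\mathcal{B}\}$ denotes the class of all structures (with domain $\subseteq\omega$) isomorphic to $\mathcal{A}$ or to $\mathcal{B}$. Linear orders are in the language $\{<\}$; $L^\star$ is the reverse of a linear order $L$; $\omega\cdot n$, $\omega^2\cdot n$ are ordinal order types. An enumeration operator $\Gamma$ is a c.e. set of pairs $(\alpha,\varphi)$ with $\alpha$ a finite set of basic (atomic or negated atomic) sentences of the input language with constants from $\omega$ and $\varphi$ a basic sentence of the output language with constants from $\omega$; $\Gamma(X)=\{\varphi : (\alpha,\varphi)\in\Gamma,\ \alpha\subseteq X\}$. $\Gamma$ is a computable embedding of $\mathcal{K}_0$ into $\mathcal{K}_1$ ($\mathcal{K}_0\leq_c\mathcal{K}_1$) if for every $\mathcal{A}\in\mathcal{K}_0$, $\Gamma$ applied to the atomic diagram of $\mathcal{A}$ is the atomic diagram of a structure $\Gamma(\mathcal{A})\in\mathcal{K}_1$, and for all $\mathcal{A},\mathcal{B}\in\mathcal{K}_0$, $\mathcal{A}\cong\mathcal{B}$ iff $\Gamma(\mathcal{A})\cong\Gamma(\mathcal{B})$. *)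

(* Defs.v *)
From Stdlib Require Import Arith List.
Import ListNotations.

Inductive prf : Type :=
| PZero : prf
| PSucc : prf
| PProj : nat -> prf
| PComp : prf -> list prf -> prf
| PRec  : prf -> prf -> prf
| PMu   : prf -> prf.

Inductive eval : prf -> list nat -> nat -> Prop :=
| ev_zero : forall v, eval PZero v 0
| ev_succ : forall x v, eval PSucc (x :: v) (S x)
| ev_proj : forall i v, i < length v -> eval (PProj i) v (nth i v 0)
| ev_comp : forall f gs v ws y,
    evals gs v ws -> eval f ws y -> eval (PComp f gs) v y
| ev_rec0 : forall f g v y, eval f v y -> eval (PRec f g) (0 :: v) y
| ev_recS : forall f g n v z y,
    eval (PRec f g) (n :: v) z -> eval g (n :: z :: v) y ->
    eval (PRec f g) (S n :: v) y
| ev_mu : forall f v n,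
    eval f (n :: v) 0 ->
    (forall m, m < n -> exists k, eval f (m :: v) (S k)) ->
    eval (PMu f) v n
with evals : list prf -> list nat -> list nat -> Prop :=
| evs_nil : forall v, evals [] v []
| evs_cons : forall g gs v w ws,
    eval g v w -> evals gs v ws -> evals (g :: gs) v (w :: ws).

Definition ce (A : nat -> Prop) : Prop :=
  exists p : prf, forall x, A x <-> exists y, eval p [x] y.

Inductive lit : Type :=
| LEq  : nat -> nat -> lit
| LNEq : nat -> nat -> lit
| LLt  : nat -> nat -> lit
| LNLt : nat -> nat -> lit.

Definition cpair (a b : nat) : nat := (a + b) * (a + b + 1) / 2 + b.

Definition code_lit (l : lit) : nat :=
  match l with
  | LEq a b  => cpair 0 (cpair a b)
  | LNEq a b => cpair 1 (cpair a b)
  | LLt a b  => cpair 2 (cpair a b)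
  | LNLt a b => cpair 3 (cpair a b)
  end.

Fixpoint code_list (s : list lit) : nat :=
  match s with
  | [] => 0
  | l :: s' => S (cpair (code_lit l) (code_list s'))
  end.

Definition code_pair (alpha : list lit) (phi : lit) : nat :=
  cpair (code_list alpha) (code_lit phi).

Record ostr : Type := Ostr { dom : nat -> Prop; rel : nat -> nat -> Prop }.

Definition diag (S : ostr) (l : lit) : Prop :=
  match l with
  | LEq a b  => dom S a /\ dom S b /\ a = b
  | LNEq a b => dom S a /\ dom S b /\ a <> b
  | LLt a b  => dom S a /\ dom S b /\ rel S a b
  | LNLt a b => dom S a /\ dom S b /\ ~ rel S a b
  end.

Definition iso_to (S : ostr) (T : Type) (r : T -> T -> Prop) : Prop :=
  exists f : nat -> T,
    (forall x y, dom S x -> dom S y -> f x = f y -> x = y) /\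
    (forall t, exists x, dom S x /\ f x = t) /\
    (forall x y, dom S x -> dom S y -> (rel S x y <-> r (f x) (f y))).

Definition iso (S S' : ostr) : Prop :=
  iso_to S {x : nat | dom S' x} (fun a b => rel S' (proj1_sig a) (proj1_sig b)).

Definition class2 (T1 : Type) (r1 : T1 -> T1 -> Prop)
                  (T2 : Type) (r2 : T2 -> T2 -> Prop) (S : ostr) : Prop :=
  iso_to S T1 r1 \/ iso_to S T2 r2.

Definition enum_apply (W : nat -> Prop) (X : lit -> Prop) (phi : lit) : Prop :=
  exists alpha : list lit, W (code_pair alpha phi) /\ forall l, In l alpha -> X l.

Definition is_diag_of (X : lit -> Prop) (S : ostr) : Prop :=
  forall l, X l <-> diag S l.

Definition computable_embedding (W : nat -> Prop) (K0 K1 : ostr -> Prop) : Prop :=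
  ce W /\
  (forall A, K0 A -> exists B, K1 B /\ is_diag_of (enum_apply W (diag A)) B) /\
  (forall A B A' B', K0 A -> K0 B ->
     is_diag_of (enum_apply W (diag A)) A' ->
     is_diag_of (enum_apply W (diag B)) B' ->
     (iso A B <-> iso A' B')).

Definition comp_leq (K0 K1 : ostr -> Prop) : Prop :=
  exists W, computable_embedding W K0 K1.

Definition fin (n : nat) : Type := {i : nat | i < n}.

Definition lex2 (p q : nat * nat) : Prop :=
  fst p < fst q \/ (fst p = fst q /\ snd p < snd q).

Definition omega_n (n : nat) : Type := (fin n * nat)%type.
Definition omega_n_lt (n : nat) (x y : omega_n n) : Prop :=
  proj1_sig (fst x) < proj1_sig (fst y) \/
  (proj1_sig (fst x) = proj1_sig (fst y) /\ snd x < snd y).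

Definition omega_star_n_lt (n : nat) (x y : omega_n n) : Prop :=
  proj1_sig (fst x) < proj1_sig (fst y) \/
  (proj1_sig (fst x) = proj1_sig (fst y) /\ snd y < snd x).

Definition omega2_n (n : nat) : Type := (fin n * (nat * nat))%type.
Definition omega2_n_lt (n : nat) (x y : omega2_n n) : Prop :=
  proj1_sig (fst x) < proj1_sig (fst y) \/
  (proj1_sig (fst x) = proj1_sig (fst y) /\ lex2 (snd x) (snd y)).

Definition omega2_star_n_lt (n : nat) (x y : omega2_n n) : Prop :=
  proj1_sig (fst x) < proj1_sig (fst y) \/
  (proj1_sig (fst x) = proj1_sig (fst y) /\ lex2 (snd y) (snd x)).

(* Main.v *)
Require Import Defs.
From Stdlib Require Import Arith List.
From Stdlib Require Import Lia Cantor Bool ProofIrrelevance IndefiniteDescription.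
Import ListNotations.

Definition det (p : prf) := forall v y y', eval p v y -> eval p v y' -> y = y'.

Lemma evals_det : forall gs, Forall det gs -> forall v ws ws', evals gs v ws -> evals gs v ws' -> ws = ws'.
Proof.
  induction gs as [|g gs IH]; intros HF v ws ws' H1 H2.
  - inversion H1; inversion H2; subst; reflexivity.
  - inversion HF; subst. inversion H1; subst; inversion H2; subst.
    f_equal; [eapply H3; eauto | eapply IH; eauto].
Qed.

Lemma det_zero : det PZero.
Proof. intros v y y' H1 H2; inversion H1; inversion H2; subst; auto. Qed.
Lemma det_succ : det PSucc.
Proof. intros v y y' H1 H2; inversion H1; inversion H2; subst; congruence. Qed.
Lemma det_proj i : det (PProj i).
Proof. intros v y y' H1 H2; inversion H1; inversion H2; subst; auto. Qed.
Lemma det_comp f gs : det f -> Forall det gs -> det (PComp f gs).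
Proof.
  intros Hf Hg v y y' H1 H2; inversion H1; inversion H2; subst.
  assert (ws = ws0) by (eapply evals_det; eauto). subst. eapply Hf; eauto.
Qed.
Lemma det_rec f g : det f -> det g -> det (PRec f g).
Proof.
  intros Hf Hg [|n v] y y' H1 H2; [inversion H1|].
  revert y y' H1 H2; induction n; intros y y' H1 H2; inversion H1; inversion H2; subst.
  - eapply Hf; eauto.
  - assert (z = z0) by (eapply IHn; eauto). subst. eapply Hg; eauto.
Qed.

Definition P_add := PRec (PProj 0) (PComp PSucc [PProj 1]).
Lemma ev_add x y : eval P_add [x; y] (x + y).
Proof.
  induction x.
  - apply ev_rec0. apply (ev_proj 0 [y]). simpl; lia.
  - simpl. eapply ev_recS; [exact IHx|].
    eapply ev_comp. apply evs_cons. apply (ev_proj 1 [x; x+y; y]); simpl; lia. apply evs_nil.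
    apply ev_succ.
Qed.
Lemma det_add : det P_add.
Proof. apply det_rec. apply det_proj. apply det_comp. apply det_succ. repeat constructor; apply det_proj. Qed.

Definition P_mul := PRec PZero (PComp P_add [PProj 1; PProj 2]).
Lemma ev_mul x y : eval P_mul [x; y] (x * y).
Proof.
  induction x.
  - apply ev_rec0. apply ev_zero.
  - eapply ev_recS; [exact IHx|].
    eapply ev_comp. apply evs_cons. apply (ev_proj 1 [x; x*y; y]); simpl; lia.
    apply evs_cons. apply (ev_proj 2 [x; x*y; y]); simpl; lia. apply evs_nil.
    simpl. replace (y + x*y) with (x*y+y) by lia. apply ev_add.
Qed.
Lemma det_mul : det P_mul.
Proof. apply det_rec. apply det_zero. apply det_comp. apply det_add. repeat constructor; apply det_proj. Qed.

Definition P_pred := PRec PZero (PProj 0).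
Lemma ev_pred x : eval P_pred [x] (pred x).
Proof.
  induction x.
  - apply ev_rec0. apply ev_zero.
  - eapply ev_recS; [exact IHx|].
    apply (ev_proj 0 [x; pred x]); simpl; lia.
Qed.
Lemma det_pred : det P_pred.
Proof. apply det_rec. apply det_zero. apply det_proj. Qed.

Definition P_rsub := PRec (PProj 0) (PComp P_pred [PProj 1]).
Lemma ev_rsub y x : eval P_rsub [y; x] (x - y).
Proof.
  induction y.
  - apply ev_rec0. replace (x - 0) with x by lia. apply (ev_proj 0 [x]); simpl; lia.
  - eapply ev_recS; [exact IHy|].
    eapply ev_comp. apply evs_cons. apply (ev_proj 1 [y; x - y; x]); simpl; lia. apply evs_nil.
    simpl. replace (x - S y) with (pred (x - y)) by lia. apply ev_pred.
Qed.
Lemma det_rsub : det P_rsub.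
Proof. apply det_rec. apply det_proj. apply det_comp. apply det_pred. repeat constructor; apply det_proj. Qed.

Definition tri (s : nat) : nat := nat_rec _ 0 (fun i m => (S i) + m) s.
Definition P_tri := PRec PZero (PComp P_add [PComp PSucc [PProj 0]; PProj 1]).
Lemma ev_tri s : eval P_tri [s] (tri s).
Proof.
  induction s.
  - apply ev_rec0, ev_zero.
  - eapply ev_recS; [exact IHs|].
    eapply ev_comp. apply evs_cons. eapply ev_comp. apply evs_cons.
    apply (ev_proj 0 [s; tri s]); simpl; lia. apply evs_nil. apply ev_succ.
    apply evs_cons. apply (ev_proj 1 [s; tri s]); simpl; lia. apply evs_nil.
    apply ev_add.
Qed.
Lemma det_tri : det P_tri.
Proof. apply det_rec. apply det_zero. apply det_comp. apply det_add.
  repeat constructor; try apply det_proj. apply det_comp. apply det_succ. repeat constructor; apply det_proj. Qed.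

Lemma to_nat_tri a b : to_nat (a, b) = b + tri (b + a).
Proof. reflexivity. Qed.

Inductive ex : Type :=
| EV : nat -> ex | EZ : ex | ES : ex -> ex
| EAdd : ex -> ex -> ex | EMul : ex -> ex -> ex | ESub : ex -> ex -> ex
| ECp : ex -> ex -> ex | EProd : ex -> ex -> ex.

Fixpoint prodn (m : nat) (f : nat -> nat) : nat :=
  match m with 0 => 1 | S m' => prodn m' f * f m' end.

Fixpoint den (e : ex) (v : list nat) : nat :=
  match e with
  | EV i => nth i v 0
  | EZ => 0
  | ES e => S (den e v)
  | EAdd a b => den a v + den b v
  | EMul a b => den a v * den b v
  | ESub a b => den a v - den b v
  | ECp a b => to_nat (den a v, den b v)
  | EProd b body => prodn (den b v) (fun i => den body (i :: v))
  end.

Fixpoint wf (k : nat) (e : ex) : bool :=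
  match e with
  | EV i => Nat.ltb i k
  | EZ => true
  | ES e => wf k e
  | EAdd a b | EMul a b | ESub a b | ECp a b => wf k a && wf k b
  | EProd b body => wf k b && wf (S k) body
  end.

Fixpoint comp (k : nat) (e : ex) : prf :=
  match e with
  | EV i => PProj i
  | EZ => PZero
  | ES e => PComp PSucc [comp k e]
  | EAdd a b => PComp P_add [comp k a; comp k b]
  | EMul a b => PComp P_mul [comp k a; comp k b]
  | ESub a b => PComp P_rsub [comp k b; comp k a]
  | ECp a b => PComp P_add [comp k b; PComp P_tri [PComp P_add [comp k b; comp k a]]]
  | EProd b body =>
      PComp (PRec (PComp PSucc [PZero])
                  (PComp P_mul [PProj 1; PComp (comp (S k) body) (PProj 0 :: map PProj (seq 2 k))]))
            (comp k b :: map PProj (seq 0 k))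
  end.

Lemma evals_projs : forall v pre, evals (map PProj (seq (length pre) (length v))) (pre ++ v) v.
Proof.
  induction v as [|x v IH]; intros pre; simpl.
  - constructor.
  - constructor.
    + replace x with (nth (length pre) (pre ++ x :: v) 0) at 2 by (rewrite nth_middle; auto).
      constructor. rewrite length_app; simpl; lia.
    + replace (pre ++ x :: v) with ((pre ++ [x]) ++ v) by (rewrite <- app_assoc; auto).
      replace (S (length pre)) with (length (pre ++ [x])) by (rewrite length_app; simpl; lia).
      apply IH.
Qed.

Lemma det_projs : forall j k, Forall det (map PProj (seq j k)).
Proof. intros j k; revert j; induction k; intros j; simpl; constructor; auto; apply det_proj. Qed.

Lemma comp_ok : forall e k v, wf k e = true -> length v = k -> eval (comp k e) v (den e v).
Proof.
  induction e; intros k v Hw Hl; simpl in *;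
    repeat match goal with H : _ && _ = true |- _ => apply andb_prop in H; destruct H end.
  - constructor. apply Nat.ltb_lt in Hw; lia.
  - constructor.
  - econstructor. constructor. apply IHe; eauto. constructor. constructor.
  - econstructor. constructor. apply IHe1; eauto. constructor. apply IHe2; eauto. constructor. apply ev_add.
  - econstructor. constructor. apply IHe1; eauto. constructor. apply IHe2; eauto. constructor. apply ev_mul.
  - econstructor. constructor. apply IHe2; eauto. constructor. apply IHe1; eauto. constructor. apply ev_rsub.
  - econstructor. constructor. apply IHe2; eauto. constructor.
    econstructor. constructor. econstructor. constructor. apply IHe2; eauto. constructor. apply IHe1; eauto.
    constructor. apply ev_add. constructor. apply ev_tri. constructor.
    apply ev_add.
  - econstructor. constructor. apply IHe1; eauto.
    pose proof (evals_projs v []) as Hp. simpl in Hp. rewrite Hl in Hp. exact Hp.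
    generalize (den e1 v). intro m. induction m.
    + apply ev_rec0. econstructor. constructor. constructor. constructor. constructor.
    + simpl. eapply ev_recS; [exact IHm|].
      econstructor. constructor. apply (ev_proj 1 (m :: prodn m (fun i => den e2 (i :: v)) :: v)); simpl; lia.
      constructor. econstructor.
      pose proof (evals_projs v [m; prodn m (fun i => den e2 (i :: v))]) as Hp. simpl in Hp.
      rewrite Hl in Hp. constructor. apply (ev_proj 0 (m :: _ :: v)); simpl; lia. exact Hp.
      apply IHe2; simpl; auto. constructor. apply ev_mul.
Qed.

Lemma comp_det : forall e k, det (comp k e).
Proof.
  induction e; intros k; simpl;
   repeat (first [ apply det_comp | apply det_rec | apply det_proj | apply det_zero | apply det_succ
         | apply det_add | apply det_mul | apply det_rsub | apply det_tri | apply det_projs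
         | constructor | apply IHe | apply IHe1 | apply IHe2]).
Qed.

Lemma cpair_to_nat a b : cpair a b = to_nat (a, b).
Proof. unfold cpair. rewrite to_nat_spec2.
  replace (b + a) with (a + b) by lia. replace (S (a + b)) with (a + b + 1) by lia. lia. Qed.

Opaque to_nat.

Definition mklit (t a b : nat) : lit :=
  match t with 0 => LEq a b | 1 => LNEq a b | 2 => LLt a b | _ => LNLt a b end.

Definition slit := (nat * nat * nat)%type.
Definition sphi := (nat * nat * nat * nat * nat)%type.
Definition srule := (list slit * sphi)%type.

Definition inst_lit (env : list nat) (l : slit) : lit :=
  let '(t, i, j) := l in mklit t (nth i env 0) (nth j env 0).
Definition inst_phi (env : list nat) (p : sphi) : lit :=
  let '(t, i, j, k, l) := p in
  mklit t (cpair (nth i env 0) (nth j env 0)) (cpair (nth k env 0) (nth l env 0)).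
Definition inst_rule (env : list nat) (r : srule) : list lit * lit :=
  (map (inst_lit env) (fst r), inst_phi env (snd r)).

Fixpoint econst (k : nat) : ex := match k with 0 => EZ | S k => ES (econst k) end.
Lemma den_econst k v : den (econst k) v = k.
Proof. induction k; simpl; auto. Qed.

Definition ex_lit (l : slit) : ex :=
  let '(t, i, j) := l in ECp (econst t) (ECp (EV i) (EV j)).
Definition ex_phi (p : sphi) : ex :=
  let '(t, i, j, k, l) := p in
  ECp (econst t) (ECp (ECp (EV i) (EV j)) (ECp (EV k) (EV l))).
Fixpoint ex_list (s : list slit) : ex :=
  match s with [] => EZ | l :: s => ES (ECp (ex_lit l) (ex_list s)) end.
Definition ex_rule (r : srule) : ex := ECp (ex_list (fst r)) (ex_phi (snd r)).

Lemma code_mklit t a b : t < 4 -> code_lit (mklit t a b) = to_nat (t, to_nat (a, b)).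
Proof. intros H. destruct t as [|[|[|[|t]]]]; simpl; rewrite ?cpair_to_nat; auto; lia. Qed.

Definition tag_ok (r : srule) : Prop :=
  Forall (fun l : slit => let '(t, _, _) := l in t < 4) (fst r) /\
  (let '(t, _, _, _, _) := snd r in t < 4).

Lemma den_rule r env : tag_ok r -> den (ex_rule r) env = code_pair (fst (inst_rule env r)) (snd (inst_rule env r)).
Proof.
  destruct r as [al [[[[t i] j] k] l]]. intros [Ha Ht]. simpl in *.
  unfold code_pair. rewrite cpair_to_nat. f_equal. f_equal.
  - induction al as [|l0 al IH]; simpl; auto. destruct l0 as [[t' i'] j']. inversion Ha; subst.
    rewrite cpair_to_nat, IH by auto. unfold inst_lit, ex_lit. rewrite code_mklit by auto. simpl. rewrite den_econst. reflexivity.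
  - unfold inst_phi, ex_phi. rewrite code_mklit by auto. simpl. rewrite den_econst, !cpair_to_nat. reflexivity.
Qed.

(* indices: d=0 c=1 b=2 a=3 *)
Definition rules : list srule := [
  ([(0,3,3); (0,2,2)], (0,3,2,3,2));
  ([(1,3,1); (0,2,2); (0,0,0)], (1,3,2,1,0));
  ([(1,2,0); (0,3,3); (0,1,1)], (1,3,2,1,0));
  ([(2,3,1); (0,2,2); (0,0,0)], (2,3,2,1,0));
  ([(0,3,3); (2,2,0)], (2,3,2,3,0));
  ([(3,3,1); (1,3,1); (0,2,2); (0,0,0)], (3,3,2,1,0));
  ([(3,3,3); (3,2,0)], (3,3,2,3,0)) ].

Lemma rules_ok : Forall tag_ok rules.
Proof. repeat constructor; simpl; lia. Qed.

Definition absd (a b : ex) := EAdd (ESub a b) (ESub b a).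
Definition ex_rules (rs : list srule) : ex :=
  fold_right (fun r acc => EMul (absd (EV 5) (ex_rule r)) acc) (ES EZ) rs.
Definition Fex := EProd (EV 0) (EProd (EV 1) (EProd (EV 2) (EProd (EV 3) (ex_rules rules)))).
Definition Pw := PMu (comp 2 Fex).
Definition Wset (x : nat) : Prop := exists y, eval Pw [x] y.

Lemma wf_Fex : wf 2 Fex = true.
Proof. vm_compute. reflexivity. Qed.

Lemma prodn_zero m f : prodn m f = 0 <-> exists i, i < m /\ f i = 0.
Proof.
  induction m; simpl.
  - split; [discriminate|intros [i [Hi _]]; lia].
  - rewrite Nat.mul_eq_0, IHm. split.
    + intros [[i [Hi Hf]]|H]; [exists i; split; auto; lia| exists m; auto].
    + intros [i [Hi Hf]]. destruct (Nat.eq_dec i m); [subst; auto|left; exists i; split; auto; lia].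
Qed.

Lemma ex_rules_zero rs env : Forall tag_ok rs ->
  (den (ex_rules rs) env = 0 <-> exists r, In r rs /\ nth 5 env 0 = code_pair (fst (inst_rule env r)) (snd (inst_rule env r))).
Proof.
  induction rs as [|r rs IH]; intros Hok.
  - simpl; split; [discriminate| intros [r [[] _]]].
  - inversion Hok; subst. unfold ex_rules; cbn [fold_right]; fold (ex_rules rs). unfold absd. cbn [den]. rewrite Nat.mul_eq_0, IH by auto.
    rewrite den_rule by auto. split.
    + intros [H|[r' [Hin He]]]; [exists r; split; [left; reflexivity|lia]| exists r'; split; [right|]; auto].
    + intros [r' [[<-|Hin] He]]; [left; lia| right; exists r'; auto].
Qed.

Lemma den_Fex_zero n x : den Fex [n; x] = 0 <->
  exists r a b c d, In r rules /\ a < n /\ b < n /\ c < n /\ d < n /\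
    x = code_pair (fst (inst_rule [d;c;b;a;n;x] r)) (snd (inst_rule [d;c;b;a;n;x] r)).
Proof.
  unfold Fex. cbn [den nth]. rewrite prodn_zero. split.
  - intros [a [Ha H]]. apply prodn_zero in H. destruct H as [b [Hb H]].
    apply prodn_zero in H. destruct H as [c [Hc H]]. apply prodn_zero in H. destruct H as [d [Hd H]].
    apply ex_rules_zero in H; [|apply rules_ok]. destruct H as [r [Hr He]].
    exists r, a, b, c, d. simpl in He. repeat split; auto.
  - intros [r [a [b [c [d [Hr [Ha [Hb [Hc [Hd He]]]]]]]]]].
    exists a; split; auto. apply prodn_zero. exists b; split; auto.
    apply prodn_zero. exists c; split; auto. apply prodn_zero. exists d; split; auto.
    apply ex_rules_zero; [apply rules_ok|]. exists r; split; auto.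
Qed.

Lemma least_aux (P : nat -> nat) : forall n,
  (exists m, P m = 0 /\ forall k, k < m -> P k <> 0) \/ (forall k, k < n -> P k <> 0).
Proof.
  induction n as [|n [IH|IH]].
  - right; intros; lia.
  - left; auto.
  - destruct (Nat.eq_dec (P n) 0).
    + left; exists n; auto.
    + right; intros k Hk. destruct (Nat.eq_dec k n); [subst; auto| apply IH; lia].
Qed.
Lemma least (P : nat -> nat) n : P n = 0 -> exists m, P m = 0 /\ forall k, k < m -> P k <> 0.
Proof.
  intros H. destruct (least_aux P (S n)) as [H'|H']; auto. exfalso; apply (H' n); auto.
Qed.

Lemma mu_inv f v n : eval (PMu f) v n -> eval f (n :: v) 0.
Proof. intros H; inversion H; auto. Qed.

Lemma Wset_iff x : Wset x <-> exists r a b c d, In r rules /\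
   x = code_pair (fst (inst_rule [d;c;b;a] r)) (snd (inst_rule [d;c;b;a] r)).
Proof.
  assert (Hinst : forall r d c b a n, In r rules ->
     inst_rule [d;c;b;a;n;x] r = inst_rule [d;c;b;a] r).
  { intros r d c b a n Hr. simpl in Hr.
    repeat (destruct Hr as [<-|Hr]; [reflexivity|]); destruct Hr. }
  split.
  - intros [y Hy]. apply mu_inv in Hy.
    assert (den Fex [y; x] = 0).
    { symmetry. eapply comp_det; [exact Hy|apply comp_ok; [apply wf_Fex|reflexivity]]. }
    apply den_Fex_zero in H. destruct H as [r [a [b [c [d [Hr [_ [_ [_ [_ He]]]]]]]]]].
    exists r, a, b, c, d. rewrite Hinst in He; auto.
  - intros [r [a [b [c [d [Hr He]]]]]].
    destruct (least (fun m => den Fex [m; x]) (S (a + b + c + d))) as [m [Hm Hmin]].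
    { apply den_Fex_zero. exists r, a, b, c, d. rewrite Hinst by auto. repeat split; auto; lia. }
    exists m. constructor.
    + assert (E := comp_ok Fex 2 [m;x] wf_Fex eq_refl). rewrite Hm in E. exact E.
    + intros k Hk. specialize (Hmin k Hk). destruct (den Fex [k; x]) eqn:E; [congruence|].
      exists n. rewrite <- E. apply comp_ok; [apply wf_Fex|reflexivity].
Qed.

Lemma cpair_inj a b c d : cpair a b = cpair c d -> a = c /\ b = d.
Proof. rewrite !cpair_to_nat. intros H. apply to_nat_inj in H. inversion H; auto. Qed.

Lemma code_lit_inj l l' : code_lit l = code_lit l' -> l = l'.
Proof.
  destruct l, l'; simpl; intros H; apply cpair_inj in H; destruct H as [H1 H2];
   try discriminate; apply cpair_inj in H2; destruct H2; subst; auto.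
Qed.
Lemma code_list_inj s s' : code_list s = code_list s' -> s = s'.
Proof.
  revert s'; induction s as [|l s IH]; intros [|l' s']; simpl; intros H; try discriminate; auto.
  injection H; intros H'. apply cpair_inj in H'. destruct H'. f_equal; auto using code_lit_inj.
Qed.
Lemma code_pair_inj a p a' p' : code_pair a p = code_pair a' p' -> a = a' /\ p = p'.
Proof. unfold code_pair; intros H; apply cpair_inj in H; destruct H; split; auto using code_lit_inj, code_list_inj. Qed.

Lemma of_cpair a b : of_nat (cpair a b) = (a, b).
Proof. rewrite cpair_to_nat. apply cancel_of_to. Qed.

Definition sq (A : ostr) : ostr :=
  Ostr (fun x => exists a b, dom A a /\ dom A b /\ x = cpair a b)
       (fun x y => rel A (fst (of_nat x)) (fst (of_nat y)) \/
                   (fst (of_nat x) = fst (of_nat y) /\ rel A (snd (of_nat x)) (snd (of_nat y)))).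

Tactic Notation "use_rule" constr(k) constr(a) constr(b) constr(c) constr(d) :=
  exists (fst (inst_rule [d;c;b;a] (nth k rules ([], (0,0,0,0,0))))); split;
  [ apply Wset_iff; exists (nth k rules ([], (0,0,0,0,0))), a, b, c, d; split;
      [ simpl; tauto | reflexivity ]
  | simpl; intros l Hl; repeat (destruct Hl as [<-|Hl]; [simpl; repeat split; auto; intro; match goal with Hn : ~ _ |- _ => apply Hn end; auto|]); destruct Hl ].

Lemma enum_iff (A : ostr) l : enum_apply Wset (diag A) l <-> diag (sq A) l.
Proof.
  split.
  - intros [alpha [HW Hal]]. apply Wset_iff in HW.
    destruct HW as [r [a [b [c [d [Hr He]]]]]].
    apply code_pair_inj in He. destruct He as [E1 E2]. subst alpha l.
    simpl in Hr.
    repeat (destruct Hr as [<-|Hr]; [ simpl in Hal |- *;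
      repeat match goal with
      | Hal : forall l, _ \/ _ -> _ |- _ =>
          let h := fresh "h" in
          pose proof (Hal _ (or_introl eq_refl)) as h; simpl in h;
          assert (Hal' := fun l H => Hal l (or_intror H)); clear Hal; rename Hal' into Hal
      end; rewrite ?of_cpair; simpl;
      repeat match goal with H : _ /\ _ |- _ => destruct H end;
      idtac |]); [..|destruct Hr].
  all: split; [do 2 eexists; eauto|split; [do 2 eexists; eauto|]].
  all: try reflexivity; try (intros HH; apply cpair_inj in HH; tauto); try tauto; try (right; split; auto).
  - intros Hd. destruct l as [x y|x y|x y|x y]; simpl in Hd;
    destruct Hd as [[a [b [Ha [Hb ->]]]] [[c [d [Hc [Hd' ->]]]] H]];
    rewrite ?of_cpair in H; simpl in H.
    + apply cpair_inj in H; destruct H as [<- <-]. use_rule 0 a b 0 0.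
    + destruct (Nat.eq_dec a c) as [<-|Hac].
      * assert (b <> d) by (intro; subst; auto). use_rule 2 a b a d.
      * use_rule 1 a b c d.
    + destruct H as [H|[<- H]]; [use_rule 3 a b c d| use_rule 4 a b a d].
    + destruct (Nat.eq_dec a c) as [<-|Hac]; [use_rule 6 a b a d| use_rule 5 a b c d].
Qed.

Lemma diag_iso S S' T r : (forall l, diag S l <-> diag S' l) -> iso_to S T r -> iso_to S' T r.
Proof.
  intros Hd [f [Hi [Hs Hr]]].
  assert (Hdom : forall x, dom S x <-> dom S' x).
  { intros x. split; intros H; [apply (Hd (LEq x x))|apply (Hd (LEq x x))]; simpl; auto. }
  exists f; refine (conj _ (conj _ _)).
  - intros x y Hx Hy; apply Hi; apply Hdom; auto.
  - intros t; destruct (Hs t) as [x [Hx E]]; exists x; split; auto; apply Hdom; auto.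
  - intros x y Hx Hy. assert (Hx' := proj2 (Hdom x) Hx). assert (Hy' := proj2 (Hdom y) Hy).
    split; intros H.
   + assert (HH : diag S (LLt x y)) by (apply Hd; simpl; auto). simpl in HH. apply Hr; tauto.
   + assert (HH : diag S (LLt x y)) by (simpl; split; auto; split; auto; apply Hr; auto).
     apply Hd in HH. simpl in HH. tauto.
Qed.

Definition lexr {T} (r : T -> T -> Prop) (p q : T * T) : Prop :=
  r (fst p) (fst q) \/ (fst p = fst q /\ r (snd p) (snd q)).

Lemma sq_iso A T r : iso_to A T r -> iso_to (sq A) (T * T) (lexr r).
Proof.
  intros [f [Hi [Hs Hr]]].
  exists (fun x => (f (fst (of_nat x)), f (snd (of_nat x)))); refine (conj _ (conj _ _)).
  - intros x y [a [b [Ha [Hb ->]]]] [c [d [Hc [Hd ->]]]]. rewrite !of_cpair. simpl.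
    intros E. injection E; intros E2 E1. apply Hi in E1; [|auto|auto]. apply Hi in E2; [|auto|auto]. subst; auto.
  - intros [t1 t2]. destruct (Hs t1) as [a [Ha <-]]. destruct (Hs t2) as [b [Hb <-]].
    exists (cpair a b). split; [exists a, b; auto|]. rewrite of_cpair. reflexivity.
  - intros x y [a [b [Ha [Hb ->]]]] [c [d [Hc [Hd ->]]]]. simpl. rewrite !of_cpair. simpl.
    unfold lexr; simpl. split.
    + intros [H|[<- H]]; [left; apply Hr; auto| right; split; auto; apply Hr; auto].
    + intros [H|[E H]]; [left; apply Hr; auto| right; split; [apply Hi; auto|apply Hr; auto]].
Qed.

Lemma iso_bij S T r U (r' : U -> U -> Prop) (h : T -> U) : iso_to S T r ->
  (forall t t', h t = h t' -> t = t') -> (forall u, exists t, h t = u) ->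
  (forall t t', r t t' <-> r' (h t) (h t')) -> iso_to S U r'.
Proof.
  intros [f [Hi [Hs Hr]]] hi hs hr.
  exists (fun x => h (f x)); refine (conj _ (conj _ _)).
  - intros x y Hx Hy E. apply Hi; auto.
  - intros u. destruct (hs u) as [t <-]. destruct (Hs t) as [x [Hx <-]]. eauto.
  - intros x y Hx Hy. rewrite <- hr. apply Hr; auto.
Qed.

Lemma iso_comp S S' T r : iso S S' -> iso_to S' T r -> iso_to S T r.
Proof.
  intros [g [Hi [Hs Hr]]] [f [Hi' [Hs' Hr']]].
  exists (fun x => f (proj1_sig (g x))); refine (conj _ (conj _ _)).
  - intros x y Hx Hy E. apply Hi; auto. apply Hi' in E; try apply proj2_sig.
    destruct (g x), (g y); simpl in *; subst. f_equal. apply proof_irrelevance.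
  - intros t. destruct (Hs' t) as [y [Hy <-]]. destruct (Hs (exist _ y Hy)) as [x [Hx E]].
    exists x; split; auto. rewrite E; reflexivity.
  - intros x y Hx Hy. rewrite Hr by auto. apply Hr'; apply proj2_sig.
Qed.

Lemma iso_of S S' T r : iso_to S T r -> iso_to S' T r -> iso S S'.
Proof.
  intros [f [Hi [Hs Hr]]] [f' [Hi' [Hs' Hr']]].
  assert (G : forall x, {y | dom S' y /\ f' y = f x}).
  { intros x. apply constructive_indefinite_description. apply Hs'. }
  exists (fun x => exist _ (proj1_sig (G x)) (proj1 (proj2_sig (G x)))); refine (conj _ (conj _ _)).
  - intros x y Hx Hy E. injection E; intros E'.
    destruct (G x) as [x' [Hx' Ex]], (G y) as [y' [Hy' Ey]]; simpl in *. subst y'.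
    apply Hi; auto. congruence.
  - intros [y Hy]. destruct (Hs (f' y)) as [x [Hx Ex]]. exists x; split; auto.
    destruct (G x) as [x' [Hx' Ex']]; simpl.
    assert (x' = y) by (apply Hi'; auto; congruence). subst. f_equal. apply proof_irrelevance.
  - intros x y Hx Hy. simpl. destruct (G x) as [x' [Hx' Ex]], (G y) as [y' [Hy' Ey]]; simpl.
    rewrite Hr by auto. rewrite Hr' by auto. rewrite Ex, Ey. tauto.
Qed.

Definition hasminT {T} (r : T -> T -> Prop) := exists t, forall t', t' <> t -> r t t'.
Definition hasmin (S : ostr) := exists x, dom S x /\ forall y, dom S y -> y <> x -> rel S x y.

Lemma hasmin_to S T r : iso_to S T r -> hasminT r -> hasmin S.
Proof.
  intros [f [Hi [Hs Hr]]] [t Ht]. destruct (Hs t) as [x [Hx <-]].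
  exists x; split; [auto|]. intros y Hy Hne. apply (proj2 (Hr x y Hx Hy)). apply Ht. intros E; apply Hne; apply Hi; auto.
Qed.
Lemma hasmin_from S T r : iso_to S T r -> hasmin S -> hasminT r.
Proof.
  intros [f [Hi [Hs Hr]]] [x [Hx H]]. exists (f x). intros t' Hne.
  destruct (Hs t') as [y [Hy <-]]. apply (proj1 (Hr x y Hx Hy)). apply H; auto. 
Qed.

Lemma enc_lt n k j k' j' : j < n -> j' < n -> (k*n+j < k'*n+j' <-> k<k' \/ (k=k' /\ j<j')).
Proof.
  intros Hj Hj'. split.
  - intros H. destruct (lt_eq_lt_dec k k') as [[Hk|Hk]|Hk]; [left; auto|right; subst; split; lia|].
    exfalso. assert (k'*n + n <= k*n) by nia. lia.
  - intros [Hk|[-> Hk]]; [|lia]. assert (k*n + n <= k'*n) by nia. lia.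
Qed.
Lemma enc_eq n k j k' j' : j < n -> j' < n -> (k*n+j = k'*n+j' <-> k=k' /\ j=j').
Proof.
  intros Hj Hj'. split; [|intros [-> ->]; auto].
  intros H. destruct (lt_eq_lt_dec k k') as [[Hk|Hk]|Hk].
  - assert (k*n + n <= k'*n) by nia. lia.
  - subst; lia.
  - assert (k'*n + n <= k*n) by nia. lia.
Qed.

Lemma fin_eq n (i i' : fin n) : proj1_sig i = proj1_sig i' -> i = i'.
Proof. destruct i, i'; simpl; intros ->; f_equal; apply proof_irrelevance. Qed.

Lemma pair_eq n (i i' : fin n) (k k' : nat) : (i, k) = (i', k') <-> (proj1_sig i = proj1_sig i' /\ k = k').
Proof. split; [intros E; injection E; intros; subst; auto| intros [E ->]; apply fin_eq in E; subst; auto]. Qed.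

Definition h1 n (p : omega_n n * omega_n n) : omega2_n n :=
  let '((i, k), (j, l)) := p in (i, (k * n + proj1_sig j, l)).
Definition h2 n (p : omega_n n * omega_n n) : omega2_n n :=
  let '((i, k), (j, l)) := p in (i, (k * n + (n - 1 - proj1_sig j), l)).

Lemma h1_inj n t t' : h1 n t = h1 n t' -> t = t'.
Proof.
  destruct t as [[i k] [[j Hj] l]], t' as [[i' k'] [[j' Hj'] l']]. simpl.
  intros E. injection E; intros El Em Ei. apply enc_eq in Em; auto. destruct Em; subst.
  f_equal; f_equal; apply fin_eq; auto.
Qed.
Lemma h2_inj n t t' : h2 n t = h2 n t' -> t = t'.
Proof.
  destruct t as [[i k] [[j Hj] l]], t' as [[i' k'] [[j' Hj'] l']]. simpl.
  intros E. injection E; intros El Em Ei. apply enc_eq in Em; try lia. destruct Em; subst.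
  f_equal; f_equal; apply fin_eq; simpl; lia.
Qed.

Lemma h1_surj n : 1 <= n -> forall u, exists t, h1 n t = u.
Proof.
  intros Hn [i [m l]]. assert (Hlt : m mod n < n) by (apply Nat.mod_upper_bound; lia).
  exists ((i, m / n), (exist _ (m mod n) Hlt, l)). simpl. f_equal. f_equal.
  pose proof (Nat.div_mod_eq m n). lia.
Qed.
Lemma h2_surj n : 1 <= n -> forall u, exists t, h2 n t = u.
Proof.
  intros Hn [i [m l]]. assert (Hlt : m mod n < n) by (apply Nat.mod_upper_bound; lia).
  assert (Hlt' : n - 1 - m mod n < n) by lia.
  exists ((i, m / n), (exist _ (n - 1 - m mod n) Hlt', l)). simpl. f_equal. f_equal.
  pose proof (Nat.div_mod_eq m n). lia.
Qed.

Lemma h1_rel n t t' : lexr (omega_n_lt n) t t' <-> omega2_n_lt n (h1 n t) (h1 n t').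
Proof.
  destruct t as [[[i Hi] k] [[j Hj] l]], t' as [[[i' Hi'] k'] [[j' Hj'] l']].
  unfold lexr, omega_n_lt, omega2_n_lt, lex2. simpl. rewrite (pair_eq n (exist _ i Hi) (exist _ i' Hi') k k'). simpl.
  rewrite enc_lt, enc_eq by auto. lia.
Qed.
Lemma h2_rel n t t' : lexr (omega_star_n_lt n) t t' <-> omega2_star_n_lt n (h2 n t) (h2 n t').
Proof.
  destruct t as [[[i Hi] k] [[j Hj] l]], t' as [[[i' Hi'] k'] [[j' Hj'] l']].
  unfold lexr, omega_star_n_lt, omega2_star_n_lt, lex2. simpl. rewrite (pair_eq n (exist _ i Hi) (exist _ i' Hi') k k'). simpl.
  rewrite enc_lt, enc_eq by lia. lia.
Qed.

Lemma min1 n : 1 <= n -> hasminT (omega_n_lt n).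
Proof.
  intros Hn. assert (H0 : 0 < n) by lia. exists (exist _ 0 H0, 0).
  intros [[i Hi] k] Hne. unfold omega_n_lt; simpl.
  destruct i; [|left; lia]. right; split; auto. destruct k; [|lia].
  exfalso; apply Hne. f_equal. apply fin_eq; auto.
Qed.
Lemma nomin1 n : ~ hasminT (omega_star_n_lt n).
Proof.
  intros [[i k] H]. specialize (H (i, S k)). unfold omega_star_n_lt in H; simpl in H.
  assert ((i, S k) <> (i, k)) by (intros E; injection E; lia). apply H in H0. lia.
Qed.
Lemma min2 n : 1 <= n -> hasminT (omega2_n_lt n).
Proof.
  intros Hn. assert (H0 : 0 < n) by lia. exists (exist _ 0 H0, (0, 0)).
  intros [[i Hi] [m l]] Hne. unfold omega2_n_lt, lex2; simpl.
  destruct i; [|left; lia]. right; split; auto. destruct m; [|lia]. destruct l; [|lia].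
  exfalso; apply Hne. f_equal. apply fin_eq; auto.
Qed.
Lemma nomin2 n : ~ hasminT (omega2_star_n_lt n).
Proof.
  intros [[i [m l]] H]. specialize (H (i, (m, S l))). unfold omega2_star_n_lt, lex2 in H; simpl in H.
  assert ((i, (m, S l)) <> (i, (m, l))) by (intros E; injection E; lia). apply H in H0. lia.
Qed.

Lemma incompat S T1 r1 T2 r2 : iso_to S T1 r1 -> iso_to S T2 r2 -> hasminT r1 -> ~ hasminT r2 -> False.
Proof. intros H1 H2 m1 m2. apply m2. eapply hasmin_from; [exact H2|]. eapply hasmin_to; [exact H1|exact m1]. Qed.

Theorem theorem3p1 : forall n : nat, 1 <= n ->
  comp_leq (class2 (omega_n n) (omega_n_lt n) (omega_n n) (omega_star_n_lt n))
           (class2 (omega2_n n) (omega2_n_lt n) (omega2_n n) (omega2_star_n_lt n)).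
Proof.
  intros n Hn. exists Wset. split; [|split].
  - exists Pw. intros x. reflexivity.
  - intros A HA. exists (sq A). split.
    + destruct HA as [H|H]; [left|right].
      * exact (iso_bij _ _ _ _ _ (h1 n) (sq_iso _ _ _ H) (h1_inj n) (h1_surj n Hn) (h1_rel n)).
      * exact (iso_bij _ _ _ _ _ (h2 n) (sq_iso _ _ _ H) (h2_inj n) (h2_surj n Hn) (h2_rel n)).
    + intros l. apply enum_iff.
  - intros A B A' B' HA HB HA' HB'.
    assert (DA : forall l, diag (sq A) l <-> diag A' l) by (intros l; rewrite <- enum_iff; apply HA').
    assert (DB : forall l, diag (sq B) l <-> diag B' l) by (intros l; rewrite <- enum_iff; apply HB').
    assert (T1 : forall S S', iso_to S (omega_n n) (omega_n_lt n) -> (forall l, diag (sq S) l <-> diag S' l) ->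
              iso_to S' (omega2_n n) (omega2_n_lt n)).
    { intros S S' H D. eapply diag_iso; [exact D|].
      exact (iso_bij _ _ _ _ _ (h1 n) (sq_iso _ _ _ H) (h1_inj n) (h1_surj n Hn) (h1_rel n)). }
    assert (T2 : forall S S', iso_to S (omega_n n) (omega_star_n_lt n) -> (forall l, diag (sq S) l <-> diag S' l) ->
              iso_to S' (omega2_n n) (omega2_star_n_lt n)).
    { intros S S' H D. eapply diag_iso; [exact D|].
      exact (iso_bij _ _ _ _ _ (h2 n) (sq_iso _ _ _ H) (h2_inj n) (h2_surj n Hn) (h2_rel n)). }
    destruct HA as [HA|HA]; destruct HB as [HB|HB].
    + split; intros _; eapply iso_of; eauto.
    + split; intros H; exfalso.
      * eapply incompat; [exact HA| eapply iso_comp; [exact H|exact HB] | apply min1; auto | apply nomin1].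
      * eapply incompat; [exact (T1 _ _ HA DA)| eapply iso_comp; [exact H|exact (T2 _ _ HB DB)] | apply min2; auto | apply nomin2].
    + split; intros H; exfalso.
      * eapply incompat; [eapply iso_comp; [exact H|exact HB]| exact HA | apply min1; auto | apply nomin1].
      * eapply incompat; [eapply iso_comp; [exact H|exact (T1 _ _ HB DB)]| exact (T2 _ _ HA DA) | apply min2; auto | apply nomin2].
    + split; intros _; eapply iso_of; eauto.
Qed.
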